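(* For all $p\in(0,1)$ and $n\ge0$, $\mathbb P^{\mathrm{aon}}_p[o\rightsquigarrow\partial B_{n+1}]=\mathbb P''_p[o\leftrightsquigarrow\partial B_n]$. Consequently $\mathbb P''_p[o\leftrightsquigarrow\infty]=\mathbb P^{\mathrm{aon}}_p[o\rightsquigarrow\infty]\le \mathbb P_p[o\rightsquigarrow\infty]=\mathbb P'_p[o\leftrightsquigarrow\infty]$.
   Context: On $\mathbb Z^d$, $B_n=\{x:\|x\|_1\le n\}$, $\partial B_n=B_{n+1}\setminus B_n$. $\mathbb P^{\mathrm{aon}}_p$: independently, each vertex $u$ opens directed edges to all its $2d$ nearest neighbors with probability $p$ and to none with probability $1-p$. $\mathbb P_p$: each directed nearest-neighbor edge is open independently with probability $p$. For these directed models, $\{o\rightsquigarrow\partial B_n\}$ is the event that a path of open directed edges leads from $o$ to $\partial B_n$, and $\{o\rightsquigarrow\infty\}$ the event that infinitely many vertices are reachable from $o$ by such paths. $\mathbb P''_p$ is i.i.d. site percolation (each vertex open independently with probability $p$); under it $\{o\leftrightsquigarrow\partial B_n\}$ is the event that there is a nearest-neighbor path from $o$ to a vertex of $\partial B_n$ all of whose vertices (including $o$ and the endpoint) are open, and $\{o\leftrightsquigarrow\infty\}$ that the open cluster of $o$ is infinite. $\mathbb P'_p$ is undirected Bernoulli bond percolation with parameter $p$ and $\{o\leftrightsquigarrow\infty\}$ the event that the open cluster of $o$ is infinite. *)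

(* Defs.v *)
From HB Require Import structures.
From mathcomp Require Import all_boot all_order all_algebra.
From mathcomp Require Import all_classical all_reals all_analysis.
Set Implicit Arguments. Unset Strict Implicit. Unset Printing Implicit Defensive.
Import Order.TTheory GRing.Theory Num.Theory.
Local Open Scope classical_set_scope.
Local Open Scope ring_scope.

Definition V (d : nat) := 'I_d -> int.

Definition origin (d : nat) : V d := fun _ => 0%Z.
Arguments origin : clear implicits.

Definition norm1 (d : nat) (x : V d) : nat := (\sum_(i < d) `|x i|)%N.

(* B_n = {x : |x|_1 <= n};  dB_n = B_{n+1} \ B_n = {x : |x|_1 = n+1} *)
Definition ball1 (d n : nat) : set (V d) := [set x | (@norm1 d x <= n)%N].
Arguments ball1 : clear implicits.
Definition bdry (d n : nat) : set (V d) := ball1 d n.+1 `\` ball1 d n.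
Arguments bdry : clear implicits.

Definition shift (d : nat) (x : V d) (i : 'I_d) (b : bool) : V d :=
  fun j => if j == i then x j + (if b then 1 else -1)%R else x j.

Fixpoint chain (T : Type) (E : T -> T -> Prop) (x : T) (s : seq T) : Prop :=
  match s with
  | [::] => True
  | y :: s' => E x y /\ chain E y s'
  end.

Definition reaches (T : Type) (E : T -> T -> Prop) (x : T) (A : set T) : Prop :=
  exists s : seq T, chain E x s /\ A (last x s).

Definition reachset (T : Type) (E : T -> T -> Prop) (x : T) : set T :=
  [set y | reaches E x (eq y)].

(* An i.i.d. family of Bernoulli(p) random variables (true = open):
   each event {X i = true} is measurable and for any finitely many distinct
   indices the product rule holds. *)
Definition iid_bernoulli (R : realType) (dT : measure_display)
  (T : measurableType dT) (P : probability T R) (I : Type)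
  (X : I -> T -> bool) (p : R) : Prop :=
  (forall i, measurable [set w | X i w]) /\
  (forall (n : nat) (f : 'I_n -> I) (b : 'I_n -> bool), injective f ->
     P [set w | forall k, X (f k) w = b k] =
     (\prod_(k < n) (if b k then p else 1 - p))%:E).

(* all-or-none: vertex u opens all 2d outgoing directed edges when X u *)
Definition aon_edge (d : nat) (T : Type) (X : V d -> T -> bool) (w : T)
  (x y : V d) : Prop := X x w /\ exists i b, y = shift x i b.

(* directed Bernoulli bond: directed edge (x, x +- e_i) indexed by (x,i,b) *)
Definition dir_edge (d : nat) (T : Type) (Y : V d * 'I_d * bool -> T -> bool)
  (w : T) (x y : V d) : Prop := exists i b, y = shift x i b /\ Y (x, i, b) w.

(* site percolation: a step to y requires y open (o open required separately) *)
Definition site_edge (d : nat) (T : Type) (X : V d -> T -> bool) (w : T)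
  (x y : V d) : Prop := (exists i b, y = shift x i b) /\ X y w.

(* undirected Bernoulli bond: undirected edge {x, x + e_i} indexed by (x,i) *)
Definition bond_edge (d : nat) (T : Type) (Z : V d * 'I_d -> T -> bool)
  (w : T) (x y : V d) : Prop :=
  exists i, (y = shift x i true /\ Z (x, i) w) \/ (x = shift y i true /\ Z (y, i) w).

Definition aon_reach d T (X : V d -> T -> bool) (A : set (V d)) : set T :=
  [set w | reaches (aon_edge X w) (origin d) A].
Definition aon_inf d T (X : V d -> T -> bool) : set T :=
  [set w | ~ finite_set (reachset (aon_edge X w) (origin d))].

Definition dir_inf d T (Y : V d * 'I_d * bool -> T -> bool) : set T :=
  [set w | ~ finite_set (reachset (dir_edge Y w) (origin d))].

Definition site_reach d T (X : V d -> T -> bool) (A : set (V d)) : set T :=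
  [set w | X (origin d) w /\ reaches (site_edge X w) (origin d) A].
(* open cluster of o (empty if o is closed) *)
Definition site_cluster d T (X : V d -> T -> bool) (w : T) : set (V d) :=
  [set y | X (origin d) w /\ reaches (site_edge X w) (origin d) (eq y)].
Definition site_inf d T (X : V d -> T -> bool) : set T :=
  [set w | ~ finite_set (site_cluster X w)].

Definition bond_inf d T (Z : V d * 'I_d -> T -> bool) : set T :=
  [set w | ~ finite_set (reachset (bond_edge Z w) (origin d))].

(* Main.v *)
Require Import Defs.
From HB Require Import structures.
From mathcomp Require Import all_boot all_order all_algebra.
From mathcomp Require Import all_classical all_reals all_analysis.
From mathcomp Require Import ring lra zify.
Require Import Defs.
Import Order.TTheory GRing.Theory Num.Theory.

Set Implicit Arguments. Unset Strict Implicit. Unset Printing Implicit Defensive.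
Close Scope ring_scope. Close Scope classical_set_scope.
Local Open Scope ring_scope.

Section ExTheory.
Variable R : realFieldType.
Variable p : R.

Section OneType.
Variable I : eqType.

Definition upd (c : I -> bool) (j : I) (b : bool) : I -> bool :=
  fun i => if i == j then b else c i.

Fixpoint Ex (J : seq I) (F : (I -> bool) -> R) (c : I -> bool) : R :=
  match J with
  | [::] => F c
  | j :: J' => p * Ex J' F (upd c j true) + (1 - p) * Ex J' F (upd c j false)
  end.

Lemma Ex_ext J F G c : (forall c, F c = G c) -> Ex J F c = Ex J G c.
Proof. by move=> FG; elim: J c => [|j J IH] c /=; rewrite ?FG ?IH. Qed.

Lemma Ex_frozen J F G c :
  (forall c', (forall i, i \notin J -> c' i = c i) -> F c' = G c') ->
  Ex J F c = Ex J G c.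
Proof.
elim: J c => [|j J IH] c H /=; first by apply: H.
congr (_ * _ + _ * _); apply: IH => c' Hc'; apply: H => i.
  rewrite inE negb_or => /andP[ij iJ]; rewrite Hc' // /upd (negbTE ij) //.
rewrite inE negb_or => /andP[ij iJ]; rewrite Hc' // /upd (negbTE ij) //.
Qed.

Lemma Ex_out J F c c' : (forall i, i \notin J -> c i = c' i) ->
  Ex J F c = Ex J F c'.
Proof.
elim: J c c' => [|j J IH] c c' H /=.
  by congr F; apply: funext => i; apply: H.
congr (_ * _ + _ * _); apply: IH => i iJ; rewrite /upd;
  case: eqP => // /eqP ij; apply: H; rewrite // inE negb_or ij iJ //.
Qed.

Definition dep_on (K : seq I) (F : (I -> bool) -> R) :=
  forall c c', (forall i, i \in K -> c i = c' i) -> F c = F c'.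

Lemma Ex_dep K J F c c' : dep_on K F ->
  (forall i, i \in K -> i \notin J -> c i = c' i) -> Ex J F c = Ex J F c'.
Proof.
move=> dF; elim: J c c' => [|j J IH] c c' H /=.
  by apply: dF => i iK; apply: H.
congr (_ * _ + _ * _); apply: IH => i iK iJ; rewrite /upd;
  case: eqP => // /eqP ij; apply: H; rewrite // inE negb_or ij iJ //.
Qed.

Lemma Ex_const J a c : Ex J (fun _ => a) c = a.
Proof. by elim: J c => [|j J IH] c //=; rewrite !IH; ring. Qed.

Lemma Ex_dup j J F c : j \in J -> Ex (j :: J) F c = Ex J F c.
Proof.
move=> jJ /=.
rewrite (@Ex_out J F (upd c j true) c) ?(@Ex_out J F (upd c j false) c);
  first by ring.
all: by move=> i iJ; rewrite /upd; case: eqP => // ij; move: iJ; rewrite ij jJ.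
Qed.

Lemma Ex_irr K j J F c : dep_on K F -> j \notin K ->
  Ex (j :: J) F c = Ex J F c.
Proof.
move=> dF jK /=.
rewrite (@Ex_dep K J F (upd c j true) c) ?(@Ex_dep K J F (upd c j false) c) //;
  first by ring.
all: by move=> i iK _; rewrite /upd; case: eqP => // ij; rewrite -ij iK in jK.
Qed.

Lemma upd_comm c j1 j2 b1 b2 : j1 != j2 ->
  upd (upd c j1 b1) j2 b2 = upd (upd c j2 b2) j1 b1.
Proof.
move=> ne; apply: funext => i; rewrite /upd.
case: (i =P j2) => [e2|]; case: (i =P j1) => [e1|] //.
by move: ne; rewrite -e1 -e2 eqxx.
Qed.

Lemma Ex_swap j1 j2 J F c :
  Ex [:: j1, j2 & J] F c = Ex [:: j2, j1 & J] F c.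
Proof.
case: (eqVneq j1 j2) => [->//|ne] /=.
rewrite !(upd_comm _ _ _ ne); ring.
Qed.

Lemma Ex_congr_cons j J1 J2 F c :
  (forall c, Ex J1 F c = Ex J2 F c) -> Ex (j :: J1) F c = Ex (j :: J2) F c.
Proof. by move=> H /=; rewrite !H. Qed.

Lemma Ex_cons_cat j J1 J2 F c :
  Ex (j :: J1 ++ J2) F c = Ex (J1 ++ j :: J2) F c.
Proof.
elim: J1 c => [|k J1 IH] c //=.
rewrite -!IH /=; have := Ex_swap j k (J1 ++ J2) F c => /= ->; done.
Qed.

Lemma Ex_perm J J' F c : perm_eq J J' -> Ex J F c = Ex J' F c.
Proof.
elim: J J' c => [|j J IH] J' c.
  by move/perm_size; case: J'.
move=> pe; have jJ' : j \in J' by rewrite -(perm_mem pe) mem_head.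
move: pe; case/splitPr: jJ' => J2 J3 pe.
rewrite -Ex_cons_cat; apply: Ex_congr_cons => c1; apply: IH.
have h : perm_eq (J2 ++ j :: J3) (j :: (J2 ++ J3)).
  by rewrite -cat1s perm_catCA.
by rewrite -(perm_cons j); apply: perm_trans pe h.
Qed.

Lemma Ex_cat J1 J2 F c : Ex (J1 ++ J2) F c = Ex J1 (Ex J2 F) c.
Proof. by elim: J1 c => [|j J1 IH] c //=; rewrite !IH. Qed.

Lemma Ex_filter K J F c : dep_on K F ->
  Ex J F c = Ex [seq j <- J | j \in K] F c.
Proof.
move=> dF; elim: J c => [|j J IH] c //=.
case: ifP => jK /=; first by rewrite !IH.
by rewrite -IH -(@Ex_irr K j J F c) ?jK.
Qed.

Lemma Ex_undup J F c : Ex J F c = Ex (undup J) F c.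
Proof.
elim: J c => [|j J IH] c //.
rewrite /undup -/(undup J); case: ifP => jJ; first by rewrite Ex_dup.
by rewrite /= !IH.
Qed.

Lemma Ex_canon K J J' F c c' : dep_on K F ->
  {subset K <= J} -> {subset K <= J'} -> Ex J F c = Ex J' F c'.
Proof.
move=> dF KJ KJ'.
rewrite (Ex_filter J c dF) (Ex_filter J' c' dF) Ex_undup (Ex_undup _ _ c').
set L := undup _; set L' := undup _.
have pe : perm_eq L L'.
  apply: uniq_perm; rewrite ?undup_uniq // => x.
  rewrite !mem_undup !mem_filter; apply/andP/andP => -[xK _]; split => //.
    exact: KJ'.
  exact: KJ.
rewrite (Ex_perm _ _ pe); apply: (Ex_dep dF) => i iK.
by rewrite mem_undup mem_filter iK KJ'.
Qed.

Lemma Ex_lin J F G a b c :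
  Ex J (fun c => a * F c + b * G c) c = a * Ex J F c + b * Ex J G c.
Proof. by elim: J c => [|j J IH] c //=; rewrite !IH; ring. Qed.

Lemma Ex_le J F G c : 0 <= p -> p <= 1 -> (forall c, F c <= G c) ->
  Ex J F c <= Ex J G c.
Proof.
move=> p0 p1 FG; elim: J c => [|j J IH] c //=.
by apply: lerD; apply: ler_wpM2l; rewrite ?subr_ge0 ?IH.
Qed.

Lemma Ex_nhas J L c : uniq J -> {subset J <= L} ->
  Ex J (fun c => (~~ has c L)%:R) c =
  (1 - p) ^+ size J * (~~ has c [seq l <- L | l \notin J])%:R.
Proof.
elim: J c => [|j J IH] c /=.
  by move=> _ _; rewrite expr0 mul1r filter_predT.
move=> /andP[jJ uJ] sub.
have subJ : {subset J <= L} by move=> x xJ; apply: sub; rewrite inE xJ orbT.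
rewrite !IH //.
have jL : j \in [seq l <- L | l \notin J] by rewrite mem_filter jJ sub ?mem_head.
have -> : has (upd c j true) [seq l <- L | l \notin J].
  by apply/hasP; exists j => //; rewrite /upd eqxx.
have -> : has (upd c j false) [seq l <- L | l \notin J] =
          has c [seq l <- L | l \notin j :: J].
  apply/hasP/hasP => -[x]; rewrite !mem_filter /upd.
    move=> /andP[xJ xL]; case: eqP => // /eqP xj cx; exists x => //.
    by rewrite mem_filter inE negb_or xj xJ xL.
  rewrite inE negb_or => /andP[/andP[xj xJ] xL] cx; exists x; first by rewrite mem_filter xJ xL.
  by rewrite (negbTE xj).
by rewrite /= mulr0 mulr0 add0r exprS mulrA.
Qed.

Lemma Ex_has J c : uniq J ->
  Ex J (fun c => (has c J)%:R) c = 1 - (1 - p) ^+ size J.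
Proof.
move=> uJ.
have -> : Ex J (fun c => (has c J)%:R) c =
   Ex J (fun c => 1 * 1 + (-1) * (~~ has c J)%:R) c.
  by apply: Ex_ext => c'; case: has => /=; ring.
rewrite Ex_lin Ex_const Ex_nhas // (_ : [seq l <- J | l \notin J] = [::]).
  by rewrite /=; ring.
by apply/eqP; rewrite -[_ == _]negbK -has_filter; apply/hasP => -[x ->].
Qed.

End OneType.

Section TwoTypes.
Variables I1 I2 : eqType.

Lemma Ex_fubini (J1 : seq I1) (J2 : seq I2) H c1 c2 :
  Ex J1 (fun c => Ex J2 (H c) c2) c1 =
  Ex J2 (fun c' => Ex J1 (fun c => H c c') c1) c2.
Proof.
elim: J1 c1 => [|j J1 IH] c1 //=.
by rewrite !IH -Ex_lin.
Qed.

Lemma Ex_transfer (J0 : seq I1) (phi : I1 -> I2) F1 F2 :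
  uniq J0 -> {in J0 &, injective phi} ->
  (forall c1 c2, (forall j, j \in J0 -> c1 j = c2 (phi j)) -> F1 c1 = F2 c2) ->
  forall J c1 c2, uniq J -> {subset J <= J0} ->
  (forall j, j \in J0 -> j \notin J -> c1 j = c2 (phi j)) ->
  Ex J F1 c1 = Ex (map phi J) F2 c2.
Proof.
move=> uJ0 inj HF; elim => [|j J IH] c1 c2 /=.
  by move=> _ _ H; apply: HF => i iJ; apply: H.
move=> /andP[jJ uJ] sub H.
have subJ : {subset J <= J0} by move=> x xJ; apply: sub; rewrite inE xJ orbT.
have j0 : j \in J0 by apply: sub; rewrite mem_head.
congr (_ * _ + _ * _); apply: IH => // i i0 iJ; rewrite /upd;
  (case: (eqVneq i j) => [->|ij]; first by rewrite eqxx);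
  (have -> : (phi i == phi j) = false by
     apply/negbTE; apply: contra ij => /eqP /inj; move=> /(_ i0 j0) ->);
  by apply: H => //; rewrite inE negb_or ij.
Qed.

End TwoTypes.
End ExTheory.

Set Implicit Arguments. Unset Strict Implicit. Unset Printing Implicit Defensive.
Close Scope ring_scope. Close Scope classical_set_scope.
Local Open Scope classical_set_scope.
Local Open Scope ring_scope.

Section Link.
Variable R : realType.
Variable p : R.
Variables (dT : measure_display) (T : measurableType dT) (P : probability T R).
Variable I : eqType.
Variable X : I -> T -> bool.
Hypothesis hX : iid_bernoulli P X p.

Definition wgt (b : bool) : R := if b then p else 1 - p.

Definition cyl (K : seq I) (c : I -> bool) : set T :=
  [set w | forall k, k \in K -> X k w = c k].

Lemma cyl_meas K c : measurable (cyl K c).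
Proof.
elim: K => [|k K IH].
  by rewrite (_ : cyl [::] c = setT) //; apply/seteqP; split => w //=.
have -> : cyl (k :: K) c = [set w | X k w = c k] `&` cyl K c.
  apply/seteqP; split => w /=.
    by move=> H; split; [apply: H; rewrite mem_head|move=> i iK; apply: H; rewrite inE iK orbT].
  by move=> [H1 H2] i; rewrite inE => /orP[/eqP->//|]; apply: H2.
apply: measurableI => //.
case: (c k).
  by rewrite (_ : [set w | X k w = true] = [set w | X k w]) //; case: hX.
rewrite (_ : [set w | X k w = false] = ~` [set w | X k w]).
  by apply: measurableC; case: hX.
by apply/seteqP; split => w /=; case: (X k w).
Qed.

Lemma P_cyl K c : uniq K -> P (cyl K c) = (\prod_(k <- K) wgt (c k))%:E.
Proof.
move=> uK; have [_ H0] := hX.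
have inj : injective (tnth (in_tuple K)).
  move=> i j; have x0 : I := tnth (in_tuple K) i.
  rewrite !(tnth_nth x0) /= => /eqP.
  by rewrite nth_uniq // => /eqP /val_inj.
have H := H0 (size K) (tnth (in_tuple K)) (fun i => c (tnth (in_tuple K) i)) inj.
rewrite (_ : cyl K c = [set w | forall k, X (tnth (in_tuple K) k) w = c (tnth (in_tuple K) k)]); last first.
  apply/seteqP; split => w /=.
    by move=> Hw k; apply: Hw; apply: mem_tnth.
  move=> Hw k kK; have /tnthP [i ->] : k \in in_tuple K by [].
  by apply: Hw.
rewrite H; congr (_%:E).
rewrite (big_tuple _ _ (in_tuple K) predT (fun k => wgt (c k))).
by apply: eq_bigr => i _; rewrite /wgt.
Qed.

Lemma link_gen (G : (I -> bool) -> bool) :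
  forall J K c, uniq (J ++ K) -> dep_on (J ++ K) (fun c => (G c)%:R : R) ->
  measurable (cyl K c `&` [set w | G (fun i => X i w)]) /\
  P (cyl K c `&` [set w | G (fun i => X i w)]) =
  ((\prod_(k <- K) wgt (c k)) * Ex p J (fun c => (G c)%:R) c)%:E.
Proof.
elim => [|j J IH] K c.
  move=> uK dG /=.
  have HG : forall w, cyl K c w -> G (fun i => X i w) = G c.
    move=> w Hw; have := dG (fun i => X i w) c => /= /(_ Hw).
    by case: (G _); case: (G c) => //= /eqP; rewrite ?oner_eq0 // eq_sym oner_eq0.
  case Gc : (G c).
    rewrite (_ : _ `&` _ = cyl K c); last first.
      by apply/seteqP; split => w /=; [case|move=> Hw; split => //; rewrite HG].
    by split; [apply: cyl_meas|rewrite P_cyl // mulr1].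
  rewrite (_ : _ `&` _ = set0); last first.
    by apply/seteqP; split => w //= [Hw]; rewrite HG // Gc.
  by split => //; rewrite measure0 mulr0.
move=> u dG.
have jK : j \notin K.
  by move: u; rewrite cat_cons /= mem_cat negb_or => /andP[/andP[]].
have u' : uniq (J ++ j :: K).
  by rewrite -cat1s (perm_uniq (permEl (perm_catCA J [:: j] K))).
have dG' : dep_on (J ++ j :: K) (fun c => (G c)%:R : R).
  move=> c1 c2 H; apply: dG => i; rewrite cat_cons inE mem_cat => Hi.
  by apply: H; rewrite mem_cat inE; move: Hi => /orP[->|/orP[]->]; rewrite ?orbT.
have [m1 e1] := IH (j :: K) (upd c j true) u' dG'.
have [m2 e2] := IH (j :: K) (upd c j false) u' dG'.
have Ksame : forall b, \prod_(k <- K) wgt (upd c j b k) = \prod_(k <- K) wgt (c k).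
  move=> b; rewrite big_seq_cond [RHS]big_seq_cond; apply: eq_bigr => k /andP[kK _].
  by rewrite /upd; case: eqP => // ekj; move: jK; rewrite -ekj kK.
have split_eq : cyl K c `&` [set w | G (fun i => X i w)] =
  (cyl (j :: K) (upd c j true) `&` [set w | G (fun i => X i w)]) `|`
  (cyl (j :: K) (upd c j false) `&` [set w | G (fun i => X i w)]).
  apply/seteqP; split => w /=.
    move=> [Hw Gw]; case Xj : (X j w); [left|right]; split => // k;
      rewrite inE /upd => /orP[/eqP->|kK]; rewrite ?eqxx //;
      (case: eqP => [ekj|_]; [by move: jK; rewrite -ekj kK|by apply: Hw]).
  have sub : forall b, cyl (j :: K) (upd c j b) `<=` cyl K c.
    move=> b w' Hw k kK; rewrite Hw ?inE ?kK ?orbT // /upd.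
    by case: eqP => // ekj; move: jK; rewrite -ekj kK.
  by case=> -[Hw Gw]; split => //; apply: (sub _ _ Hw).
rewrite split_eq; split; first exact: measurableU.
rewrite measureU //; last first.
  apply/seteqP; split => w //= [[H1 _] [H2 _]].
  have h1 := H1 j (mem_head _ _); have h2 := H2 j (mem_head _ _).
  by move: h1 h2; rewrite /upd eqxx => ->.
etransitivity; first exact: (congr2 (fun a b => (a + b)%E) e1 e2).
rewrite -EFinD; congr (_%:E).
rewrite !big_cons /= /upd eqxx !Ksame /wgt; ring.
Qed.

Lemma linkA (G : (I -> bool) -> bool) J c :
  uniq J -> dep_on J (fun c => (G c)%:R : R) ->
  measurable [set w | G (fun i => X i w)] /\
  P [set w | G (fun i => X i w)] = (Ex p J (fun c => (G c)%:R) c)%:E.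
Proof.
move=> uJ dG.
have := @link_gen G J [::] c; rewrite cats0 => /(_ uJ dG) [m e].
have E : cyl [::] c `&` [set w | G (fun i => X i w)] = [set w | G (fun i => X i w)].
  by apply/seteqP; split => w //= [].
by rewrite -E e big_nil mul1r; split => //; rewrite -E.
Qed.

End Link.

Set Implicit Arguments. Unset Strict Implicit. Unset Printing Implicit Defensive.
Close Scope ring_scope. Close Scope classical_set_scope.
Local Open Scope classical_set_scope.

Definition eqV (d : nat) (x y : V d) : bool := [forall i, x i == y i].
Lemma eqVP (d : nat) : Equality.axiom (@eqV d).
Proof.
move=> x y; apply: (iffP forallP) => [H|->//].
by apply: funext => i; apply/eqP.
Qed.
HB.instance Definition V_eqMixin (d : nat) := hasDecEq.Build (V d) (@eqVP d).

Section Graph.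
Variable d : nat.
Implicit Types (x y s : V d) (W l : seq (V d)) (S A N : set (V d)).

Lemma norm_shift x i b :
  (norm1 (shift x i b) <= (norm1 x).+1)%N /\ (norm1 x <= (norm1 (shift x i b)).+1)%N.
Proof.
have ns : forall y : V d, norm1 y = (`|y i| + \sum_(j < d | j != i) `|y j|)%N.
  by move=> y; rewrite /norm1 (bigD1 i).
rewrite !ns.
have -> : (\sum_(j < d | j != i) `|shift x i b j|)%N = (\sum_(j < d | j != i) `|x j|)%N.
  by apply: eq_bigr => j ji; rewrite /shift (negbTE ji).
rewrite /shift eqxx; case: b; lia.
Qed.

Definition adj x y := exists i b, y = shift x i b.

Lemma adj_norm x y : adj x y ->
  (norm1 y <= (norm1 x).+1)%N /\ (norm1 x <= (norm1 y).+1)%N.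
Proof. by move=> [i [b ->]]; apply: norm_shift. Qed.

Lemma norm_origin : norm1 (origin d) = 0%N.
Proof. by rewrite /norm1 big1. Qed.

Lemma bdryE n x : bdry d n x <-> norm1 x = n.+1.
Proof.
rewrite /bdry /ball1 /=; split.
  by move=> [h1 h2]; apply/eqP; rewrite eqn_leq h1 /=; rewrite ltnNge; apply/negP.
by move=> ->; split => //; rewrite ltnn.
Qed.

Lemma first_hit (E : V d -> V d -> Prop) : (forall x y, E x y -> adj x y) ->
  forall l x k, chain E x l -> (norm1 x <= k)%N -> (k <= norm1 (last x l))%N ->
  exists l', [/\ chain E x l', norm1 (last x l') = k &
                 all (fun y => norm1 y <= k)%N l'].
Proof.
move=> Eadj; elim => [|y l IH] x k /=.
  by move=> _ h1 h2; exists [::]; split => //; apply/eqP; rewrite eqn_leq h1 h2.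
move=> [Exy ch] h1 h2.
case: (eqVneq (norm1 x) k) => [<-|ne]; first by exists [::].
have [hy _] := adj_norm (Eadj _ _ Exy).
have hyk : (norm1 y <= k)%N by lia.
have [l' [c' e' a']] := IH y k ch hyk h2.
by exists (y :: l'); split => //=; rewrite hyk.
Qed.

Definition ballList (n : nat) : seq (V d) :=
  undup [seq x <- [seq (fun i => ((f i : nat)%:Z - n%:Z)%R : int)
                  | f : {ffun 'I_d -> 'I_(n.*2.+1)} <- enum {ffun 'I_d -> 'I_(n.*2.+1)}] | (norm1 x <= n)%N].

Lemma norm_coord x i : (`|x i| <= norm1 x)%N.
Proof. by rewrite /norm1 (bigD1 i) //= leq_addr. Qed.

Lemma mem_ballList n x : (x \in ballList n) = (norm1 x <= n)%N.
Proof.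
rewrite mem_undup mem_filter; apply/andP/idP => [[]//|hx]; split => //.
apply/mapP; exists [ffun i => inord (absz (x i + n%:Z)%R) : 'I_(n.*2.+1)].
  by rewrite mem_enum.
apply: funext => i; rewrite ffunE inordK; last first.
  have := norm_coord x i; lia.
have := norm_coord x i; lia.
Qed.

Lemma ballList_uniq n : uniq (ballList n).
Proof. exact: undup_uniq. Qed.

Definition reachW (E : V d -> V d -> Prop) (W : seq (V d)) (S A : set (V d)) :=
  exists s l, [/\ S s, s \in W, chain E s l, all (fun z => z \in W) l & A (last s l)].

Definition Wm (W : seq (V d)) (S : set (V d)) := [seq x <- W | ~~ `[< S x >]].
Definition Ws (W : seq (V d)) (S : set (V d)) := [seq x <- W | `[< S x >]].
Definition Nset (E : V d -> V d -> Prop) W S : set (V d) :=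
  [set y | y \in Wm W S /\ exists s, [/\ S s, s \in W & E s y]].

Lemma chain_congr (E E' : V d -> V d -> Prop) W s l :
  (forall x y, x \in W -> y \in W -> E x y -> E' x y) ->
  s \in W -> all (fun z => z \in W) l -> chain E s l -> chain E' s l.
Proof.
move=> H; elim: l s => [|y l IH] s //= sW /andP[yW lW] [Esy ch].
by split; [apply: H|apply: IH].
Qed.

Lemma reachW_dep (E E' : V d -> V d -> Prop) W S A :
  (forall x y, x \in W -> y \in W -> E x y -> E' x y) ->
  reachW E W S A -> reachW E' W S A.
Proof.
move=> H [s [l [Ss sW ch lW As]]]; exists s, l; split => //.
exact: (chain_congr H).
Qed.

Lemma reachW_hit E W S A s : S s -> s \in W -> A s -> reachW E W S A.
Proof. by move=> Ss sW As; exists s, [::]. Qed.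

Lemma reachW_none E W S A : (forall s, S s -> s \notin W) -> ~ reachW E W S A.
Proof. by move=> H [s [l [Ss sW _ _ _]]]; move: (H s Ss); rewrite sW. Qed.

Lemma reachW_sub E W S S' A : (forall x, S x -> S' x) -> reachW E W S A -> reachW E W S' A.
Proof. by move=> H [s [l [Ss sW ch lW As]]]; exists s, l; split => //; apply: H. Qed.

Lemma decomp_aux E W S A : (forall s, S s -> s \in W -> ~ A s) ->
  forall l s, s \in W -> chain E s l -> all (fun z => z \in W) l -> A (last s l) ->
   (~ S s /\ all (fun y => ~~ `[< S y >]) l) \/ reachW E (Wm W S) (Nset E W S) A.
Proof.
move=> nA; elim => [|y l IH] s sW /=.
  by move=> _ _ As; left; split => // Ss; apply: (nA s).
move=> [Esy ch] /andP[yW lW] Al.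
case: (IH y yW ch lW Al) => [[nSy alS]|]; last by right.
case: (asboolP (S s)) => Ss; last by left; split => //; rewrite alS andbT; apply/asboolPn.
right; exists y, l; split => //.
- rewrite /Nset /= mem_filter yW andbT; split; first by apply/asboolPn.
  by exists s.
- rewrite mem_filter yW andbT; exact/asboolPn.
- apply/allP => z zl; rewrite /= mem_filter (allP lW z zl) andbT.
  exact: (allP alS z zl).
Qed.

Lemma decomp E W S A : (forall s, S s -> s \in W -> ~ A s) ->
  reachW E W S A <-> reachW E (Wm W S) (Nset E W S) A.
Proof.
move=> nA; split.
  move=> [s [l [Ss sW ch lW As]]].
  by case: (decomp_aux nA sW ch lW As) => // -[].
move=> [y [l [[yWm [s [Ss sW Esy]]] _ ch lW Al]]].
have yW : y \in W by move: yWm; rewrite mem_filter => /andP[].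
exists s, (y :: l); split => //=; rewrite yW /=.
apply/allP => z zl; have := allP lW z zl; by rewrite /= mem_filter => /andP[].
Qed.

Lemma size_Wm W S s : S s -> s \in W -> (size (Wm W S) < size W)%N.
Proof.
move=> Ss sW; rewrite size_filter -(count_predC (fun x => ~~ `[< S x >]) W).
rewrite -addn1 leq_add2l lt0n -lt0n -has_count; apply/hasP; exists s => //=.
by rewrite negbK; apply/asboolP.
Qed.

Lemma reachW_union E W N A :
  reachW E W N A <-> exists y, N y /\ reachW E W [set y] A.
Proof.
split; first by move=> [s [l [Ns sW ch lW As]]]; exists s; split => //; exists s, l.
by move=> [y [Ny [s [l [/= esy sW ch lW As]]]]]; exists s, l; split => //; rewrite esy.
Qed.

Lemma reaches_reachW E n : (forall x y, E x y -> adj x y) ->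
  reaches E (origin d) (bdry d n) <-> reachW E (ballList n.+1) [set origin d] (bdry d n).
Proof.
move=> Eadj; split.
  move=> [l [ch /bdryE hl]].
  have h0 : (norm1 (origin d) <= n.+1)%N by rewrite norm_origin.
  have [l' [ch' e' a']] := first_hit Eadj ch h0 (eq_leq (esym hl)).
  exists (origin d), l'; split => //.
  - by rewrite mem_ballList norm_origin.
  - by apply/allP => y yl; rewrite /= mem_ballList (allP a' y yl).
  - exact/bdryE.
by move=> [s [l [/= <- _ ch _ Al]]]; exists l.
Qed.

Lemma reaches_mono E n : (forall x y, E x y -> adj x y) ->
  reaches E (origin d) (bdry d n.+1) -> reaches E (origin d) (bdry d n).
Proof.
move=> Eadj [l [ch /bdryE hl]].
have h0 : (norm1 (origin d) <= n.+1)%N by rewrite norm_origin.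
have h1 : (n.+1 <= norm1 (last (origin d) l))%N by rewrite hl.
have [l' [ch' e' a']] := @first_hit E Eadj l (origin d) n.+1 ch h0 h1.
by exists l'; split => //; apply/bdryE.
Qed.

Lemma inf_char E : (forall x y, E x y -> adj x y) ->
  ~ finite_set (reachset E (origin d)) <-> forall n, reaches E (origin d) (bdry d n).
Proof.
move=> Eadj; split.
  move=> nf n; apply/not_existsP => nr; apply: nf.
  apply: (@sub_finite_set _ _ [set` ballList n]); last exact: finite_seq.
  move=> y [l [ch /= ey]]; rewrite /= mem_ballList leqNgt; apply/negP => hy.
  have h0 : (norm1 (origin d) <= n.+1)%N by rewrite norm_origin.
  have h1 : (n.+1 <= norm1 (last (origin d) l))%N by rewrite -ey.
  have [l' [ch' e' _]] := @first_hit E Eadj l (origin d) n.+1 ch h0 h1.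
  by apply: (nr l'); split => //; apply/bdryE.
move=> H /finite_seqP [s es].
pose N := (\max_(y <- s) norm1 y)%N.
have [l [ch /bdryE hl]] := H N.
have : [set` s] (last (origin d) l) by rewrite -es; exists l.
move=> /= ls; have := @leq_bigmax_seq _ s predT (fun y => norm1 y) _ ls erefl.
by rewrite -/N hl ltnn.
Qed.

End Graph.

Set Implicit Arguments. Unset Strict Implicit. Unset Printing Implicit Defensive.
Close Scope ring_scope. Close Scope classical_set_scope.
Local Open Scope classical_set_scope.
Local Open Scope ring_scope.

Section Rec.
Variables (R : realFieldType) (p : R) (d : nat) (A : set (V d)).
Variable I : eqType.
Variable E : (I -> bool) -> V d -> V d -> Prop.
Variable J : seq (V d) -> seq I.
Variable J1 : seq (V d) -> set (V d) -> seq I.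
Hypothesis HdepE : forall W c c', (forall j, j \in J W -> c j = c' j) ->
  forall x y, x \in W -> y \in W -> E c x y -> E c' x y.
Hypothesis HJ1 : forall W S j, j \in J1 W S -> j \in J W.
Hypothesis HJm : forall W S j, j \in J (Wm W S) -> j \in J W.
Hypothesis Hdisj : forall W S j, j \in J1 W S -> j \notin J (Wm W S).
Hypothesis HN : forall W S c c', (forall j, j \in J1 W S -> c j = c' j) ->
  Nset (E c) W S = Nset (E c') W S.

Definition c0 : I -> bool := fun _ => false.

Definition hh W S := Ex p (J W) (fun c => (`[< reachW (E c) W S A >])%:R) c0.

Lemma reach_dep W S c c' : (forall j, j \in J W -> c j = c' j) ->
  `[< reachW (E c) W S A >] = `[< reachW (E c') W S A >].
Proof.
move=> H; apply: asbool_equiv_eq; split; apply: reachW_dep; apply: HdepE => //.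
by move=> j jJ; rewrite H.
Qed.

Lemma hh_any W S c : Ex p (J W) (fun c => (`[< reachW (E c) W S A >])%:R) c = hh W S.
Proof.
apply: (@Ex_dep _ p _ (J W)); last by move=> i -> .
by move=> c1 c2 H; rewrite (reach_dep _ H).
Qed.

Lemma hh_hit W S : (exists s, [/\ S s, s \in W & A s]) -> hh W S = 1.
Proof.
move=> [s [Ss sW As]]; rewrite /hh (@Ex_ext _ _ _ _ _ (fun _ => 1)) ?Ex_const //.
by move=> c; rewrite asboolT //; apply: (reachW_hit _ Ss).
Qed.

Lemma hh_none W S : (forall s, S s -> s \notin W) -> hh W S = 0.
Proof.
move=> H; rewrite /hh (@Ex_ext _ _ _ _ _ (fun _ => 0)) ?Ex_const //.
by move=> c; rewrite asboolF //; apply: reachW_none.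
Qed.

Lemma hh_rec W S : (forall s, S s -> s \in W -> ~ A s) ->
  hh W S = Ex p (J1 W S) (fun c => hh (Wm W S) (Nset (E c) W S)) c0.
Proof.
move=> nA; rewrite /hh.
set F := fun c => (`[< reachW (E c) (Wm W S) (Nset (E c) W S) A >])%:R : R.
rewrite (@Ex_ext _ _ _ _ _ F); last first.
  by move=> c; rewrite /F (asbool_equiv_eq (decomp (E c) nA)).
have dF : dep_on (J1 W S ++ J (Wm W S)) F.
  move=> c c' H; rewrite /F (@HN W S c c'); last first.
    by move=> j jJ; apply: H; rewrite mem_cat jJ.
  by rewrite (@reach_dep _ _ c c') // => j jJ; apply: H; rewrite mem_cat jJ orbT.
rewrite (@Ex_canon _ _ _ _ (J W) (J1 W S ++ J (Wm W S)) F c0 c0 dF); last 2 first.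
- by move=> j; rewrite mem_cat => /orP[/HJ1|/HJm].
- by [].
rewrite Ex_cat; apply: Ex_ext => c.
apply: etrans; last exact: (hh_any (Wm W S) (Nset (E c) W S) c).
apply: Ex_frozen => c' Hc'.
rewrite /F (@HN W S c' c) //.
by move=> j jJ1; apply: Hc'; apply: Hdisj.
Qed.

End Rec.
Arguments c0 {I}.

Set Implicit Arguments. Unset Strict Implicit. Unset Printing Implicit Defensive.
Close Scope ring_scope. Close Scope classical_set_scope.
Local Open Scope classical_set_scope.
Local Open Scope ring_scope.

Section Shift.
Variable d : nat.
Implicit Types (x y : V d).

Lemma shift_inj x y i b : shift x i b = shift y i b -> x = y.
Proof.
move=> e; apply: funext => j; have := congr1 (fun f => f j) e; rewrite /shift.
by case: (j == i) => // /addIr.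
Qed.

Lemma shift_TF x i : shift (shift x i false) i true = x.
Proof.
apply: funext => j; rewrite /shift; case: (j =P i) => [->|]; rewrite ?eqxx /=; [ring|by []].
Qed.

Lemma shift_FT x i : shift (shift x i true) i false = x.
Proof.
apply: funext => j; rewrite /shift; case: (j =P i) => [->|]; rewrite ?eqxx /=; [ring|by []].
Qed.

Lemma Wm_sub W S x : x \in Wm W S -> x \in W.
Proof. by rewrite mem_filter => /andP[]. Qed.

Lemma Wm_notS W S x : x \in Wm W S -> ~ S x.
Proof. by rewrite mem_filter => /andP[/asboolPn]. Qed.

Lemma in_Wm W S x : x \in W -> ~ S x -> x \in Wm W S.
Proof. by move=> xW nS; rewrite mem_filter xW andbT; apply/asboolPn. Qed.
End Shift.

Section Models.
Variable d : nat.
Implicit Types (x y s : V d) (W : seq (V d)) (S : set (V d)).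

Definition Ea (c : V d -> bool) := aon_edge (fun x (_ : unit) => c x) tt.
Definition Ja (W : seq (V d)) := W.
Definition J1a W S := undup (Ws W S).

Lemma a_depE W c c' : (forall j, j \in Ja W -> c j = c' j) ->
  forall x y, x \in W -> y \in W -> Ea c x y -> Ea c' x y.
Proof. by move=> H x y xW yW [cx ad]; split => //; rewrite -H. Qed.
Lemma a_J1 W S j : j \in J1a W S -> j \in Ja W.
Proof. by rewrite mem_undup mem_filter => /andP[]. Qed.
Lemma a_Jm W S j : j \in Ja (Wm W S) -> j \in Ja W.
Proof. exact: Wm_sub. Qed.
Lemma a_disj W S j : j \in J1a W S -> j \notin Ja (Wm W S).
Proof.
rewrite mem_undup mem_filter => /andP[/asboolP Sj _]; apply/negP => /Wm_notS.
by apply.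
Qed.
Lemma a_N W S c c' : (forall j, j \in J1a W S -> c j = c' j) ->
  Nset (Ea c) W S = Nset (Ea c') W S.
Proof.
move=> H; apply/seteqP; split => y [yW [s [Ss sW [cs ad]]]]; split => //;
  exists s; split => //; split => //.
  by rewrite -H // mem_undup mem_filter sW andbT; apply/asboolP.
by rewrite H // mem_undup mem_filter sW andbT; apply/asboolP.
Qed.

Definition Ed (c : V d * 'I_d * bool -> bool) := dir_edge (fun e (_ : unit) => c e) tt.
Definition allD W : seq (V d * 'I_d * bool) :=
  [seq (xi.1, xi.2, b) | xi <- [seq (x, i) | x <- W, i <- enum 'I_d], b <- [:: true; false]].
Definition Jd W := [seq e <- allD W | shift e.1.1 e.1.2 e.2 \in W].
Definition J1d W S := undup [seq e <- Jd W |
  `[< S e.1.1 >] && ~~ `[< S (shift e.1.1 e.1.2 e.2) >]].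

Lemma mem_allD W x i b : ((x, i, b) \in allD W) = (x \in W).
Proof.
apply/allpairsP/idP.
  move=> [[[x' i'] b'] [/= /allpairsP [[x'' i''] [/= x''W _ ->]] _ [-> _ _]]] //.
move=> xW; exists ((x, i), b); split => //=; last by case: b.
by apply/allpairsP; exists (x, i); split => //=; rewrite mem_enum.
Qed.

Lemma mem_Jd W x i b : ((x, i, b) \in Jd W) = (x \in W) && (shift x i b \in W).
Proof. by rewrite mem_filter mem_allD andbC. Qed.

Lemma mem_J1d W S x i b : ((x, i, b) \in J1d W S) =
  [&& x \in W, shift x i b \in W, `[< S x >] & ~~ `[< S (shift x i b) >]].
Proof. by rewrite mem_undup mem_filter mem_Jd /=; case: (x \in W); case: (shift x i b \in W); case: `[< S x >]; case: `[< S (shift x i b) >]. Qed.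

Lemma d_depE W c c' : (forall j, j \in Jd W -> c j = c' j) ->
  forall x y, x \in W -> y \in W -> Ed c x y -> Ed c' x y.
Proof.
move=> H x y xW yW [i [b [ey ce]]]; exists i, b; split => //.
by rewrite -H // mem_Jd xW -ey yW.
Qed.
Lemma d_J1 W S j : j \in J1d W S -> j \in Jd W.
Proof. by rewrite mem_undup mem_filter => /andP[]. Qed.
Lemma d_Jm W S j : j \in Jd (Wm W S) -> j \in Jd W.
Proof. by case: j => [[x i] b]; rewrite !mem_Jd => /andP[/Wm_sub -> /Wm_sub ->]. Qed.
Lemma d_disj W S j : j \in J1d W S -> j \notin Jd (Wm W S).
Proof.
case: j => [[x i] b]; rewrite mem_J1d mem_Jd => /and4P[_ _ /asboolP Sx _].
by apply/negP => /andP[/Wm_notS].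
Qed.
Lemma d_N W S c c' : (forall j, j \in J1d W S -> c j = c' j) ->
  Nset (Ed c) W S = Nset (Ed c') W S.
Proof.
move=> H; apply/seteqP; split => y [yWm [s [Ss sW [i [b [ey ce]]]]]]; split => //;
  exists s; split => //; exists i, b; split => //.
all: have yW := Wm_sub yWm; have nSy := Wm_notS yWm.
  rewrite -H // mem_J1d sW -ey yW /=; apply/andP; split; [exact/asboolP|exact/asboolPn].
rewrite H // mem_J1d sW -ey yW /=; apply/andP; split; [exact/asboolP|exact/asboolPn].
Qed.

Definition Eb (c : V d * 'I_d -> bool) := bond_edge (fun e (_ : unit) => c e) tt.
Definition Jb W := [seq e <- [seq (x, i) | x <- W, i <- enum 'I_d] | shift e.1 e.2 true \in W].
Definition J1b W S := undup [seq e <- Jb W |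
  `[< S e.1 >] != `[< S (shift e.1 e.2 true) >]].

Lemma mem_Jb W x i : ((x, i) \in Jb W) = (x \in W) && (shift x i true \in W).
Proof.
rewrite mem_filter andbC; congr (_ && _).
apply/allpairsP/idP => [[[x' i'] [/= ? _ [ex ei]]]|xW]; first by rewrite ex.
by exists (x, i); split => //; rewrite mem_enum.
Qed.

Lemma mem_J1b W S x i : ((x, i) \in J1b W S) =
  [&& x \in W, shift x i true \in W & `[< S x >] != `[< S (shift x i true) >]].
Proof. by rewrite mem_undup mem_filter mem_Jb /= andbC andbA. Qed.

Lemma b_depE W c c' : (forall j, j \in Jb W -> c j = c' j) ->
  forall x y, x \in W -> y \in W -> Eb c x y -> Eb c' x y.
Proof.
move=> H x y xW yW [i [[ey ce]|[ex ce]]]; exists i; [left|right]; split => //.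
  by rewrite -H // mem_Jb xW -ey yW.
by rewrite -H // mem_Jb yW -ex xW.
Qed.
Lemma b_J1 W S j : j \in J1b W S -> j \in Jb W.
Proof. by rewrite mem_undup mem_filter => /andP[]. Qed.
Lemma b_Jm W S j : j \in Jb (Wm W S) -> j \in Jb W.
Proof. by case: j => [x i]; rewrite !mem_Jb => /andP[/Wm_sub -> /Wm_sub ->]. Qed.
Lemma b_disj W S j : j \in J1b W S -> j \notin Jb (Wm W S).
Proof.
case: j => [x i]; rewrite mem_J1b mem_Jb => /and3P[_ _ ne].
apply/negP => /andP[/Wm_notS h1 /Wm_notS h2]; move: ne.
by rewrite (asboolF h1) (asboolF h2).
Qed.
Lemma b_N W S c c' : (forall j, j \in J1b W S -> c j = c' j) ->
  Nset (Eb c) W S = Nset (Eb c') W S.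
Proof.
move=> H; apply/seteqP; split => y [yWm [s [Ss sW [i [[ey ce]|[es ce]]]]]]; split => //;
  exists s; split => //; exists i.
all: have yW := Wm_sub yWm; have nSy := Wm_notS yWm.
- left; split => //; rewrite -H // mem_J1b sW -ey yW (asboolT Ss) (asboolF nSy) //.
- right; split => //; rewrite -H // mem_J1b yW -es sW (asboolT Ss) (asboolF nSy) //.
- left; split => //; rewrite H // mem_J1b sW -ey yW (asboolT Ss) (asboolF nSy) //.
- right; split => //; rewrite H // mem_J1b yW -es sW (asboolT Ss) (asboolF nSy) //.
Qed.

End Models.

Set Implicit Arguments. Unset Strict Implicit. Unset Printing Implicit Defensive.
Close Scope ring_scope. Close Scope classical_set_scope.
Local Open Scope classical_set_scope.
Local Open Scope ring_scope.

Section Compare.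
Variables (R : realFieldType) (p : R) (d : nat) (A : set (V d)).
Hypotheses (hp0 : 0 <= p) (hp1 : p <= 1).
Implicit Types (x y s : V d) (W : seq (V d)) (S : set (V d)).

Definition hha W S := hh p A (@Ea d) (@Ja d) W S.
Definition hhd W S := hh p A (@Ed d) (@Jd d) W S.
Definition hhb W S := hh p A (@Eb d) (@Jb d) W S.

Lemma reca W S : (forall s, S s -> s \in W -> ~ A s) ->
  hha W S = Ex p (J1a W S) (fun c => hha (Wm W S) (Nset (Ea c) W S)) c0.
Proof. exact: (hh_rec p (@a_depE d) (@a_J1 d) (@a_Jm d) (@a_disj d) (@a_N d)). Qed.
Lemma recd W S : (forall s, S s -> s \in W -> ~ A s) ->
  hhd W S = Ex p (J1d W S) (fun c => hhd (Wm W S) (Nset (Ed c) W S)) c0.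
Proof. exact: (hh_rec p (@d_depE d) (@d_J1 d) (@d_Jm d) (@d_disj d) (@d_N d)). Qed.
Lemma recb W S : (forall s, S s -> s \in W -> ~ A s) ->
  hhb W S = Ex p (J1b W S) (fun c => hhb (Wm W S) (Nset (Eb c) W S)) c0.
Proof. exact: (hh_rec p (@b_depE d) (@b_J1 d) (@b_Jm d) (@b_disj d) (@b_N d)). Qed.

Lemma trich W S : (exists s, [/\ S s, s \in W & A s]) \/
  (forall s, S s -> s \notin W) \/
  ((forall s, S s -> s \in W -> ~ A s) /\ exists s, S s /\ s \in W).
Proof.
case: (pselect (exists s, [/\ S s, s \in W & A s])) => [h|h]; first by left.
case: (pselect (exists s, S s /\ s \in W)) => [h'|h']; right; last first.
  by left => s Ss; apply/negP => sW; apply: h'; exists s.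
by right; split => // s Ss sW As; apply: h; exists s.
Qed.

Definition phi (e : V d * 'I_d * bool) : V d * 'I_d :=
  if e.2 then (e.1.1, e.1.2) else (shift e.1.1 e.1.2 false, e.1.2).

Lemma phi_inj W S : {in J1d W S &, injective phi}.
Proof.
move=> [[x i] b] [[x' i'] b']; rewrite !mem_J1d.
move=> /and4P[_ _ Sx nSx] /and4P[_ _ Sx' nSx'].
rewrite /phi /=.
case: b Sx nSx => Sx nSx; case: b' Sx' nSx' => Sx' nSx' [ex ei]; subst i'.
- by rewrite ex.
- by move: nSx; rewrite ex shift_TF Sx'.
- by move: nSx'; rewrite -ex shift_TF Sx.
- by rewrite (shift_inj ex).
Qed.

Lemma dirbond_N W S c1 c2 : (forall j, j \in J1d W S -> c1 j = c2 (phi j)) ->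
  Nset (Ed c1) W S = Nset (Eb c2) W S.
Proof.
move=> H; apply/seteqP; split => y [yWm [s [Ss sW E]]]; split => //; exists s; split => //.
all: have yW := Wm_sub yWm; have nSy := Wm_notS yWm.
  move: E => [i [b [ey ce]]]; exists i.
  have mem : (s, i, b) \in J1d W S.
    by rewrite mem_J1d sW -ey yW (asboolT Ss) (asboolF nSy).
  rewrite H // /phi /= in ce; move: ce; case: b ey {mem} => ey ce.
    by left.
  by right; rewrite ey shift_TF; split.
move: E => [i [[ey ce]|[es ce]]]; exists i, (if `[< y = shift s i true >] then true else false).
  rewrite asboolT //; split => //.
  have mem : (s, i, true) \in J1d W S.
    by rewrite mem_J1d sW -ey yW (asboolT Ss) (asboolF nSy).
  by rewrite H.
have ey : y = shift s i false by rewrite es shift_FT.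
have ne : ~ (y = shift s i true).
  move=> e; move: ey; rewrite e => /(congr1 (fun f => f i)); rewrite /shift eqxx.
  lia.
rewrite asboolF //; split => //.
have mem : (s, i, false) \in J1d W S.
  by rewrite mem_J1d sW -ey yW (asboolT Ss) (asboolF nSy).
by rewrite H // /phi /= -ey.
Qed.

Lemma J1b_sub W S : {subset J1b W S <= map phi (J1d W S)}.
Proof.
move=> [x i]; rewrite mem_J1b => /and3P[xW sW ne].
case Sx : `[< S x >]; move: ne; rewrite Sx.
  move=> nS; apply/mapP; exists (x, i, true) => //.
  by rewrite mem_J1d xW sW Sx /=; case: `[< _ >] nS.
move=> Ss; apply/mapP; exists (shift x i true, i, false).
  by rewrite mem_J1d sW shift_FT xW Sx /=; case: `[< _ >] Ss.
by rewrite /phi /= shift_FT.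
Qed.

Lemma dir_bond n : forall W S, (size W < n)%N -> hhd W S = hhb W S.
Proof.
elim: n => [//|n IH] W S hs.
case: (trich W S) => [h|[h|[nA [s [Ss sW]]]]].
- by rewrite /hhd /hhb !hh_hit.
- by rewrite /hhd /hhb !hh_none.
rewrite recd // recb //.
have hs' : (size (Wm W S) < n)%N by have := size_Wm Ss sW; lia.
rewrite (@Ex_ext _ _ _ _ _ (fun c => hhb (Wm W S) (Nset (Ed c) W S))); last first.
  by move=> c; rewrite IH.
rewrite (@Ex_transfer _ p _ _ (J1d W S) phi _ (fun c => hhb (Wm W S) (Nset (Eb c) W S))
  (undup_uniq _) (@phi_inj W S) _ (J1d W S) c0 c0 (undup_uniq _)) //; last first.
  by move=> c1 c2 H; rewrite (dirbond_N H).
apply: (@Ex_canon _ _ _ (J1b W S)) => //; last exact: J1b_sub.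
by move=> c c' H; rewrite (b_N H).
Qed.

Lemma key_fixed W S (Y : set (V d)) :
  Ex p (J1a W S) (fun c => (`[< exists y, Nset (Ea c) W S y /\ Y y >])%:R) c0 <=
  Ex p (J1d W S) (fun c => (`[< exists y, Nset (Ed c) W S y /\ Y y >])%:R) c0.
Proof.
pose Ta := [seq s <- J1a W S | `[< exists y, [/\ y \in Wm W S, Y y & adj s y] >]].
pose Td := [seq e <- J1d W S | `[< Y (shift e.1.1 e.1.2 e.2) >]].
have uTa : uniq Ta by rewrite filter_uniq // undup_uniq.
have uTd : uniq Td by rewrite filter_uniq // undup_uniq.
have EA : forall c, `[< exists y, Nset (Ea c) W S y /\ Y y >] = has c Ta.
  move=> c; apply/asboolP/hasP.
    move=> [y [[yWm [s [Ss sW [cs ad]]]] Yy]]; exists s => //.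
    rewrite mem_filter mem_undup mem_filter sW (asboolT Ss) /= andbT; apply/asboolP.
    by exists y.
  move=> [s]; rewrite mem_filter mem_undup mem_filter => /andP[/asboolP [y [yWm Yy ad]]].
  move=> /andP[/asboolP Ss sW] cs; exists y; split => //; split => //; exists s; split => //.
have ED : forall c, `[< exists y, Nset (Ed c) W S y /\ Y y >] = has c Td.
  move=> c; apply/asboolP/hasP.
    move=> [y [[yWm [s [Ss sW [i [b [ey ce]]]]]] Yy]]; exists (s, i, b) => //.
    rewrite mem_filter mem_J1d sW -ey (Wm_sub yWm) (asboolT Ss) (asboolF (Wm_notS yWm)) /=.
    by rewrite andbT; apply/asboolP.
  move=> [[[s i] b]]; rewrite mem_filter mem_J1d => /andP[/asboolP Yy /and4P[sW yW /asboolP Ss /asboolPn nSy]] ce.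
  exists (shift s i b); split => //; split; first exact: in_Wm.
  by exists s; split => //; exists i, b.
rewrite (@Ex_ext _ _ _ _ _ (fun c => (has c Ta)%:R)); last by move=> c; rewrite EA.
rewrite [X in _ <= X](@Ex_ext _ _ _ _ _ (fun c => (has c Td)%:R)); last by move=> c; rewrite ED.
have dA : dep_on Ta (fun c => (has c Ta)%:R : R).
  by move=> c c' H; rewrite (@eq_in_has _ c c') // => x xT; rewrite H.
have dD : dep_on Td (fun c => (has c Td)%:R : R).
  by move=> c c' H; rewrite (@eq_in_has _ c c') // => x xT; rewrite H.
rewrite (@Ex_canon _ _ _ Ta (J1a W S) Ta _ c0 c0 dA) //; last first.
  by move=> x; rewrite mem_filter => /andP[].
rewrite (@Ex_canon _ _ _ Td (J1d W S) Td _ c0 c0 dD) //; last first.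
  by move=> x; rewrite mem_filter => /andP[].
rewrite !Ex_has //; apply: lerB => //; apply: ler_wiXn2l; rewrite ?subr_ge0 ?lerBlDr ?lerDl //.
rewrite -(size_map (fun e : V d * 'I_d * bool => e.1.1) Td); apply: uniq_leq_size => // s.
rewrite mem_filter mem_undup mem_filter => /andP[/asboolP [y [yWm Yy [i [b ey]]]]].
move=> /andP[/asboolP Ss sW]; apply/mapP; exists (s, i, b) => //.
rewrite mem_filter mem_J1d sW -ey (Wm_sub yWm) (asboolT Ss) (asboolF (Wm_notS yWm)) /=.
by rewrite andbT; apply/asboolP.
Qed.

Lemma key_ineq W S :
  Ex p (J1a W S) (fun c => hhd (Wm W S) (Nset (Ea c) W S)) c0 <=
  Ex p (J1d W S) (fun c => hhd (Wm W S) (Nset (Ed c) W S)) c0.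
Proof.
set W' := Wm W S.
pose Yc (c' : V d * 'I_d * bool -> bool) := [set y | reachW (Ed c') W' [set y] A].
have U : forall N c', `[< reachW (Ed c') W' N A >] = `[< exists y, N y /\ Yc c' y >].
  by move=> N c'; apply: asbool_equiv_eq; apply: reachW_union.
have HH : forall N, hhd W' N =
    Ex p (Jd W') (fun c' => (`[< exists y, N y /\ Yc c' y >])%:R) c0.
  by move=> N; rewrite /hhd /hh; apply: Ex_ext => c'; rewrite U.
rewrite (@Ex_ext _ _ _ _ _ (fun c => Ex p (Jd W')
   (fun c' => (`[< exists y, Nset (Ea c) W S y /\ Yc c' y >])%:R) c0)); last first.
  by move=> c; rewrite HH.
rewrite [X in _ <= X](@Ex_ext _ _ _ _ _ (fun c => Ex p (Jd W')
   (fun c' => (`[< exists y, Nset (Ed c) W S y /\ Yc c' y >])%:R) c0)); last first.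
  by move=> c; rewrite HH.
rewrite Ex_fubini [X in _ <= X]Ex_fubini.
by apply: Ex_le => // c'; apply: key_fixed.
Qed.

Lemma aon_dir n : forall W S, (size W < n)%N -> hha W S <= hhd W S.
Proof.
elim: n => [//|n IH] W S hs.
case: (trich W S) => [h|[h|[nA [s [Ss sW]]]]].
- by rewrite /hha /hhd !hh_hit.
- by rewrite /hha /hhd !hh_none.
rewrite reca // recd //.
have hs' : (size (Wm W S) < n)%N by have := size_Wm Ss sW; lia.
apply: le_trans (key_ineq W S).
by apply: Ex_le => // c; apply: IH.
Qed.

End Compare.

Set Implicit Arguments. Unset Strict Implicit. Unset Printing Implicit Defensive.
Close Scope ring_scope. Close Scope classical_set_scope.
Local Open Scope classical_set_scope.

Section Site.
Variable d : nat.
Implicit Types (x y z : V d) (l : seq (V d)) (c : V d -> bool).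

Definition Es (c : V d -> bool) := site_edge (fun x (_ : unit) => c x) tt.

Lemma Ea_adj c x y : Ea c x y -> adj x y.
Proof. by case. Qed.
Lemma Es_adj c x y : Es c x y -> adj x y.
Proof. by case. Qed.
Lemma Ed_adj (c : V d * 'I_d * bool -> bool) x y : Ed c x y -> adj x y.
Proof. by move=> [i [b [-> _]]]; exists i, b. Qed.
Lemma Eb_adj (c : V d * 'I_d -> bool) x y : Eb c x y -> adj x y.
Proof.
move=> [i [[-> _]|[-> _]]]; first by exists i, true.
by exists i, false; rewrite shift_FT.
Qed.

Lemma chain_rcons (E : V d -> V d -> Prop) x l y :
  chain E x (rcons l y) <-> chain E x l /\ E (last x l) y.
Proof.
elim: l x => [|z l IH] x /=; first by split => [[]|[]].
rewrite IH; split; [by move=> [? [? ?]]|by move=> [[? ?] ?]].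
Qed.

Lemma ea_es c x l : chain (Ea c) x l -> l != [::] ->
  c x /\ exists l', chain (Es c) x l' /\ adj (last x l') (last x l).
Proof.
elim: l x => [//|y l IH] x /= [[cx ad] ch] _; split => //.
case: (eqVneq l [::]) => [->|ne]; first by exists [::].
have [cy [l' [ch' ad']]] := IH y ch ne.
by exists (y :: l'); split => //; split => //; split.
Qed.

Lemma es_ea c x l : c x -> chain (Es c) x l -> chain (Ea c) x l /\ c (last x l).
Proof.
elim: l x => [//|y l IH] x /= cx [[ad cy] ch].
by have [ch' cl] := IH y cy ch; split => //; split.
Qed.

Lemma exists_out z : (0 < norm1 z)%N -> exists i b, norm1 (shift z i b) = (norm1 z).+1.
Proof.
move=> nz.
have [i zi] : exists i, z i != 0%R.
  apply/not_existsP => H; move: nz; rewrite /norm1 big1 // => i _.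
  by have := H i; case: eqP => // ->.
exists i, (0 < z i)%R.
have ns : forall y : V d, norm1 y = (`|y i| + \sum_(j < d | j != i) `|y j|)%N.
  by move=> y; rewrite /norm1 (bigD1 i).
rewrite !ns.
have -> : (\sum_(j < d | j != i) `|shift z i (0 < z i)%R j|)%N =
          (\sum_(j < d | j != i) `|z j|)%N.
  by apply: eq_bigr => j ji; rewrite /shift (negbTE ji).
rewrite /shift eqxx; move: zi; case: (ltrP 0 (z i)) => h zi; lia.
Qed.

Lemma part1_config c n :
  reaches (Ea c) (origin d) (bdry d n.+1) <->
  c (origin d) /\ reaches (Es c) (origin d) (bdry d n).
Proof.
split.
  move=> [l [ch /bdryE hl]].
  have ne : l != [::] by case: l ch hl => //=; rewrite norm_origin.
  have [co [l' [ch' ad]]] := ea_es ch ne; split => //.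
  have [h1 _] := adj_norm ad.
  have h0 : (norm1 (origin d) <= n.+1)%N by rewrite norm_origin.
  have h2 : (n.+1 <= norm1 (last (origin d) l'))%N by move: h1; rewrite hl.
  have [l'' [ch'' e'' _]] := first_hit (@Es_adj c) ch' h0 h2.
  by exists l''; split => //; apply/bdryE.
move=> [co [l [ch /bdryE hl]]].
have [ch' cl] := es_ea co ch.
have [i [b e]] : exists i b, norm1 (shift (last (origin d) l) i b) = (norm1 (last (origin d) l)).+1.
  by apply: exists_out; rewrite hl.
exists (rcons l (shift (last (origin d) l) i b)); split.
  by apply/chain_rcons; split => //; split => //; exists i, b.
by apply/bdryE; rewrite last_rcons e hl.
Qed.

End Site.

Set Implicit Arguments. Unset Strict Implicit. Unset Printing Implicit Defensive.
Close Scope ring_scope. Close Scope classical_set_scope.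
Local Open Scope classical_set_scope.
Local Open Scope ring_scope.

Section Final.
Variables (R : realType) (d : nat) (p : R).
Hypotheses (hp0 : 0 <= p) (hp1 : p <= 1).

Lemma lim_inter (dT : measure_display) (T : measurableType dT) (P : probability T R)
  (F : nat -> set T) : (forall n, measurable (F n)) -> (forall n, F n.+1 `<=` F n) ->
  (fun n => P (F n)) @ \oo --> P (\bigcap_n F n).
Proof.
move=> mF dF; apply: nonincreasing_cvg_mu => //.
- by apply: (@le_lt_trans _ _ 1%E); [apply: probability_le1|apply: ltry].
- exact: bigcapT_measurable.
move=> n m nm; rewrite subsetEset.
have : forall k, F (n + k)%N `<=` F n.
  elim => [|k IH]; first by rewrite addn0.
  by rewrite addnS; apply: subset_trans IH.
by move=> /(_ (m - n)%N); rewrite subnKC.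
Qed.

Section OneModel.
Variables (dT : measure_display) (T : measurableType dT) (P : probability T R).
Variable I : eqType.
Variable X : I -> T -> bool.
Hypothesis hX : iid_bernoulli P X p.
Variable E : (I -> bool) -> V d -> V d -> Prop.
Variable J : seq (V d) -> seq I.
Hypothesis HdepE : forall W c c', (forall j, j \in J W -> c j = c' j) ->
  forall x y, x \in W -> y \in W -> E c x y -> E c' x y.
Hypothesis Eadj : forall c x y, E c x y -> adj x y.

Lemma P_model n :
  measurable [set w | reaches (E (fun i => X i w)) (origin d) (bdry d n)] /\
  P [set w | reaches (E (fun i => X i w)) (origin d) (bdry d n)] =
  (hh p (bdry d n) E J (ballList d n.+1) [set origin d])%:E.
Proof.
set G := fun c => `[< reachW (E c) (ballList d n.+1) [set origin d] (bdry d n) >].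
have ev : [set w | reaches (E (fun i => X i w)) (origin d) (bdry d n)] =
          [set w | G (fun i => X i w)].
  apply/seteqP; split => w /=; rewrite /G.
    by move=> h; apply/asboolP; apply/reaches_reachW => //; apply: Eadj.
  by move=> /asboolP h; apply/(reaches_reachW _ (@Eadj _)).
have dG : dep_on (undup (J (ballList d n.+1))) (fun c => (G c)%:R : R).
  move=> c c' H; rewrite /G (@reach_dep d (bdry d n) I E J HdepE _ _ c c') // => j jJ.
  by apply: H; rewrite mem_undup.
have [m e] := linkA hX c0 (undup_uniq _) dG.
rewrite ev; split => //; rewrite e; congr (_%:E).
by rewrite /hh -Ex_undup.
Qed.

Lemma model_inf :
  [set w | ~ finite_set (reachset (E (fun i => X i w)) (origin d))] =
  \bigcap_n [set w | reaches (E (fun i => X i w)) (origin d) (bdry d n)].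
Proof.
apply/seteqP; split => w /=.
  by move=> h n _; exact: (proj1 (inf_char (@Eadj (fun i => X i w))) h n).
by move=> h; apply: (proj2 (inf_char (@Eadj (fun i => X i w)))) => n; apply: h.
Qed.

Lemma model_lim :
  (fun n => P [set w | reaches (E (fun i => X i w)) (origin d) (bdry d n)]) @ \oo -->
  P [set w | ~ finite_set (reachset (E (fun i => X i w)) (origin d))].
Proof.
rewrite model_inf; apply: lim_inter => n; first by case: (P_model n).
by move=> w /= h; exact: (reaches_mono (@Eadj (fun i => X i w)) h).
Qed.
End OneModel.

End Final.

Unset Implicit Arguments. Set Strict Implicit. Set Printing Implicit Defensive.
Close Scope ring_scope. Close Scope classical_set_scope.
Local Open Scope classical_set_scope.
Local Open Scope ring_scope.
Theorem mainTheorem8 (R : realType) (d : nat) (p : R)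
  (hp0 : 0 < p) (hp1 : p < 1)
  (d1 : measure_display) (T1 : measurableType d1) (Paon : probability T1 R)
  (X : V d -> T1 -> bool) (hX : iid_bernoulli Paon X p)
  (d2 : measure_display) (T2 : measurableType d2) (Psite : probability T2 R)
  (S : V d -> T2 -> bool) (hS : iid_bernoulli Psite S p)
  (d3 : measure_display) (T3 : measurableType d3) (Pdir : probability T3 R)
  (Y : V d * 'I_d * bool -> T3 -> bool) (hY : iid_bernoulli Pdir Y p)
  (d4 : measure_display) (T4 : measurableType d4) (Pbond : probability T4 R)
  (Z : V d * 'I_d -> T4 -> bool) (hZ : iid_bernoulli Pbond Z p) :
  (forall n : nat,
     Paon (aon_reach X (bdry d n.+1)) = Psite (site_reach S (bdry d n))) /\
  Psite (site_inf S) = Paon (aon_inf X) /\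
  (Paon (aon_inf X) <= Pdir (dir_inf Y))%E /\
  Pdir (dir_inf Y) = Pbond (bond_inf Z).
Proof.
have p0 : 0 <= p by apply: ltW.
have p1 : p <= 1 by apply: ltW.
pose o := origin d.
have Pa := fun n => @P_model R d p _ _ Paon _ X hX (@Ea d) (@Ja d) (@a_depE d) (@Ea_adj d) n.
have Pd := fun n => @P_model R d p _ _ Pdir _ Y hY (@Ed d) (@Jd d) (@d_depE d) (@Ed_adj d) n.
have Pb := fun n => @P_model R d p _ _ Pbond _ Z hZ (@Eb d) (@Jb d) (@b_depE d) (@Eb_adj d) n.
have La := @model_lim R d p _ _ Paon _ X hX (@Ea d) (@Ja d) (@a_depE d) (@Ea_adj d).
have Ld := @model_lim R d p _ _ Pdir _ Y hY (@Ed d) (@Jd d) (@d_depE d) (@Ed_adj d).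
have Lb := @model_lim R d p _ _ Pbond _ Z hZ (@Eb d) (@Jb d) (@b_depE d) (@Eb_adj d).
have P1 : forall n, Paon (aon_reach X (bdry d n.+1)) = Psite (site_reach S (bdry d n)) /\
    measurable (site_reach S (bdry d n)).
  move=> n.
  set G := fun c => `[< reachW (Ea c) (ballList d n.+2) [set o] (bdry d n.+1) >].
  have ev : site_reach S (bdry d n) = [set w | G (fun x => S x w)].
    apply/seteqP; split => w /=; rewrite /G.
      move=> h; apply/asboolP; apply/(reaches_reachW _ (@Ea_adj d _)).
      exact/part1_config.
    move=> /asboolP h; apply/(part1_config (fun x => S x w)).
    exact/(reaches_reachW _ (@Ea_adj d _)).
  have dG : dep_on (ballList d n.+2) (fun c => (G c)%:R : R).
    by move=> c c' H; rewrite /G (@reach_dep d (bdry d n.+1) _ _ (@Ja d) (@a_depE d) _ _ c c').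
  have [m e] := linkA hS c0 (ballList_uniq d n.+2) dG.
  have [_ ea] := Pa n.+1.
  rewrite ev; split => //; rewrite e.
  exact: ea.
split; first by move=> n; case: (P1 n).
split.
  have site_int : site_inf S = \bigcap_n site_reach S (bdry d n).
    apply/seteqP; split => w /=.
      move=> h n _.
      case: (pselect (S o w)) => So.
        split => //; apply: (proj1 (inf_char (@Es_adj d (fun x => S x w)))) => fin.
        apply: h; apply: sub_finite_set fin => y [_ hy]; exact: hy.
      exfalso; apply: h; apply: sub_finite_set (finite_set0 (V d)).
      by move=> y [].
    move=> h fin; have [So _] := h 0%N (I : setT 0%N).
    apply: (proj2 (inf_char (@Es_adj d (fun x => S x w)))).
      by move=> n; have [_ r] := h n (I : setT n).
    by apply: sub_finite_set fin => y hy; split.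
  have aon_int : aon_inf X = \bigcap_n aon_reach X (bdry d n.+1).
    apply/seteqP; split => w /=.
      by move=> h n _; exact: (proj1 (inf_char (@Ea_adj d (fun i => X i w))) h n.+1).
    move=> h; apply: (proj2 (inf_char (@Ea_adj d (fun i => X i w)))) => n.
    by apply: reaches_mono (@Ea_adj d _) _; apply: h.
  have ls : (fun n => Psite (site_reach S (bdry d n))) @ \oo --> Psite (site_inf S).
    rewrite site_int; apply: lim_inter => n; first by case: (P1 n).
    move=> w /= [So h]; split => //.
    exact: reaches_mono (@Es_adj d (fun x => S x w)) h.
  have la : (fun n => Paon (aon_reach X (bdry d n.+1))) @ \oo --> Paon (aon_inf X).
    rewrite aon_int; apply: lim_inter => n; first by case: (Pa n.+1).
    by move=> w /= h; exact: (reaches_mono (@Ea_adj d (fun i => X i w)) h).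
  have e : (fun n => Paon (aon_reach X (bdry d n.+1))) =
           (fun n => Psite (site_reach S (bdry d n))).
    by apply: funext => n; case: (P1 n).
  rewrite e in la.
  exact: (cvg_unique (@ereal_hausdorff R) ls la).
split.
  rewrite -(cvg_lim (@ereal_hausdorff R) La) -(cvg_lim (@ereal_hausdorff R) Ld).
  apply: lee_lim; [exact: cvgP La|exact: cvgP Ld|].
  apply: nearW => n; have [_ ->] := Pa n; have [_ ->] := Pd n.
  rewrite lee_fin.
  exact: (@aon_dir R p d (bdry d n) p0 p1 (size (ballList d n.+1)).+1 _ _ (ltnSn _)).
have e : (fun n => Pdir [set w | reaches (Ed (fun i => Y i w)) (origin d) (bdry d n)]) =
         (fun n => Pbond [set w | reaches (Eb (fun i => Z i w)) (origin d) (bdry d n)]).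
  apply: funext => n; have [_ ->] := Pd n; have [_ ->] := Pb n; congr (_%:E).
  exact: (@dir_bond R p d (bdry d n) p0 p1 (size (ballList d n.+1)).+1 _ _ (ltnSn _)).
rewrite e in Ld.
exact: (cvg_unique (@ereal_hausdorff R) Ld Lb).
Qed.
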